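(* Let $\mathcal{A}$ be a finite set of positive integers, let $w \leqslant z$ be real numbers, and let $m_1, m_2, m_3, m_4$ be real numbers with $(m_1, m_2) \in \mathcal{U}$ and $(m_3, m_4) \in \mathcal{U}$. Writing $M^r_4 = \sum_{1 \leqslant i_1 < \cdots < i_r \leqslant 4} m_{i_1}\cdots m_{i_r}$ and $P = m_1m_2m_3m_4$, we have $$ S(\mathcal{A}, z) \leqslant S(\mathcal{A}, w) - \frac{M^3_4 - M^2_4 + M^1_4 - 1}{P} \sum_{w \leqslant p_1 < z} S(\mathcal{A}_{p_1}, w) + \frac{2(M^2_4 - 3M^1_4 + 7)}{P} \sum_{w \leqslant p_2 < p_1 < z} S(\mathcal{A}_{p_1p_2}, w) $$ $$ - \frac{6(M^1_4 - 6)}{P} \sum_{w \leqslant p_3 < p_2 < p_1 < z} S(\mathcal{A}_{p_1p_2p_3}, w) + \frac{24}{P} \sum_{w \leqslant p_4 < p_3 < p_2 < p_1 < z} S(\mathcal{A}_{p_1p_2p_3p_4}, w). $$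
   Context: Throughout, $p, p_1, p_2, \dots$ denote prime numbers. For a finite set $\mathcal{A}$ of positive integers and a positive integer $d$, $\mathcal{A}_d = \{a : ad \in \mathcal{A}\}$. For real $z$, $S(\mathcal{A}, z)$ denotes the number of $a \in \mathcal{A}$ having no prime factor less than $z$. Let $T = (0,1] \cup [2,3] \cup [4,5] \cup \cdots$, i.e. $T$ is the union of $(0,1]$ and the intervals $[k-1,k]$ over all odd integers $k \geqslant 3$, and let $\mathcal{U} = \{(x_1, x_2) : x_1, x_2 \in T,\ |x_1 - x_2| \leqslant 1\}$. *)

(* Defs.v *)
From HB Require Import structures.
From mathcomp Require Import all_boot all_order all_algebra.
From mathcomp Require Import finmap.
From mathcomp Require Import reals.
Set Implicit Arguments. Unset Strict Implicit. Unset Printing Implicit Defensive.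
Import Order.TTheory GRing.Theory Num.Theory.
Local Open Scope ring_scope.
Local Open Scope fset_scope.

(* A_d = { a : a d \in A } (for d > 0; elements of A_d are exactly b %/ d for b in A with d | b) *)
Definition subA (A : {fset nat}) (d : nat) : {fset nat} :=
  [fset (b %/ d)%N | b in A & (d %| b)%N].

Definition S {R : realType} (A : {fset nat}) (z : R) : nat :=
  #|` [fset a in A | ~~ has (fun p : nat => p%:R < z) (primes a)] |.

Definition primes_between {R : realType} (w z : R) : seq nat :=
  [seq p <- iota 0 (Num.truncn z).+1 | prime p && (w <= p%:R) && (p%:R < z)].

Definition inT {R : realType} (x : R) : Prop :=
  (0 < x <= 1) \/ exists k : nat, odd k /\ (3 <= k)%N /\ (k.-1)%:R <= x <= k%:R.

Definition inU {R : realType} (x1 x2 : R) : Prop :=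
  inT x1 /\ inT x2 /\ `|x1 - x2| <= 1.

(* Main.v *)
Require Import Defs.
From HB Require Import structures.
From mathcomp Require Import all_boot all_order all_algebra.
From mathcomp Require Import finmap.
From mathcomp Require Import reals.
From mathcomp Require Import lra zify ring.
Import Order.TTheory GRing.Theory Num.Theory.
Local Open Scope ring_scope.

Section Main.
Variable R : realType.

Lemma inT_odd (x : R) : inT x ->
  0 < x /\ exists k : nat, odd k /\ (k.-1)%:R <= x <= k%:R.
Proof.
case=> [/andP[x0 x1] | [k [ok [k3 /andP[h1 h2]]]]].
  by split=> //; exists 1%N; rewrite /= x1 andbT ltW.
split; last by exists k; rewrite ok h1 h2.
apply: lt_le_trans h1; rewrite ltr0n; lia.
Qed.

Lemma between_false (x1 x2 : R) (k j n : nat) :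
  odd k -> odd j -> (k.-1)%:R <= x1 -> x1 <= k%:R -> (j.-1)%:R <= x2 -> x2 <= j%:R ->
  x2 - x1 <= 1 -> x1 < n%:R -> n%:R < x2 -> False.
Proof.
move=> ok oj hk1 hk2 hj1 hj2 hd hn1 hn2.
have k0 : (0 < k)%N by apply: odd_gt0.
have h1 : (k.-1 < n)%N by rewrite -(ltr_nat R); apply: le_lt_trans hk1 hn1.
have h2 : (n < j)%N by rewrite -(ltr_nat R); apply: lt_le_trans hn2 hj2.
have h4 : j != k.+1 by apply/eqP => E; move: oj; rewrite E /= ok.
have h3 : (k.+1 <= j.-1)%N by lia.
have h5 : (k.+1)%:R <= (j.-1)%:R :> R by rewrite ler_nat.
move: h5; rewrite -natr1 => h5.
have h6 : (k < n)%N by rewrite -(ltr_nat R); lra.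
have h7 : (n < k.+1)%N by rewrite -(ltr_nat R) -natr1; lra.
lia.
Qed.

Lemma keyU (x1 x2 : R) (n : nat) : inU x1 x2 ->
  0 <= (n%:R - x1) * (n%:R - x2).
Proof.
wlog le12 : x1 x2 / x1 <= x2.
  move=> H hU; case: (lerP x1 x2) => h; first exact: H.
  rewrite mulrC; apply: H; last (by move: hU => [a [b c]]; split => //; split => //; rewrite distrC).
  exact: ltW.
move=> [/inT_odd [_ [k [ok /andP[hk1 hk2]]]] [/inT_odd [_ [j [oj /andP[hj1 hj2]]]] hd]].
move: hd; rewrite distrC ger0_norm ?subr_ge0 // => hd.
case: (lerP (n%:R) x1) => h1.
  by apply: mulr_le0; rewrite subr_le0 //; apply: le_trans le12.
case: (lerP x2 (n%:R)) => h2.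
  by apply: mulr_ge0; rewrite subr_ge0 //; apply: le_trans h2.
exfalso; exact: (@between_false x1 x2 k j n ok oj hk1 hk2 hj1 hj2 hd h1 h2).
Qed.

Fixpoint C (k : nat) (s : seq nat) (p : nat) : R :=
  if k is k'.+1 then \sum_(q <- s | (q < p)%N) C k' s q else 1.

Definition E k s := \sum_(p <- s) C k s p.

Lemma Cx k x s : sorted ltn (x :: s) -> C k.+1 (x :: s) x = 0.
Proof.
move=> /= hs; rewrite big_cons ltnn /= big_seq_cond big1 // => q /andP[qs qx].
have := order_path_min ltn_trans hs; move/allP/(_ q qs) => xq.
by move: qx; rewrite ltnNge ltnW.
Qed.

Lemma Ccons k x s p : sorted ltn (x :: s) -> p \in s ->
  C k.+1 (x :: s) p = C k.+1 s p + C k s p.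
Proof.
move=> hs; elim: k p => [|k IH] p ps.
  have xp : (x < p)%N by have := order_path_min ltn_trans hs; move/allP/(_ p ps).
  by rewrite /= big_cons xp addrC.
have xp : (x < p)%N by have := order_path_min ltn_trans hs; move/allP/(_ p ps).
have -> : C k.+2 (x :: s) p = C k.+1 (x :: s) x + \sum_(q <- s | (q < p)%N) C k.+1 (x :: s) q.
  by rewrite /= big_cons xp.
rewrite Cx // add0r.
rewrite big_seq_cond (eq_bigr (fun q => C k.+1 s q + C k s q)); last first.
  by move=> q /andP[qs _]; rewrite IH.
by rewrite big_split /= -!big_seq_cond.
Qed.

Lemma Econs k x s : sorted ltn (x :: s) ->
  E k (x :: s) = E k s + (if k is k'.+1 then E k' s else 1).
Proof.
move=> hs; rewrite /E big_cons; case: k => [|k].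
  rewrite /= addrC; congr (_ + _); apply: eq_big_seq => q _ //.
rewrite Cx // add0r big_seq (eq_bigr (fun q => C k.+1 s q + C k s q)).
  by rewrite big_split /= -!big_seq.
by move=> q qs; rewrite Ccons.
Qed.

Lemma Eform s : sorted ltn s ->
  let N := (size s)%:R : R in
  [/\ E 0 s = N, E 1 s * 2 = N * (N - 1), E 2 s * 6 = N * (N - 1) * (N - 2)
    & E 3 s * 24 = N * (N - 1) * (N - 2) * (N - 3)].
Proof.
elim: s => [|x s IH] hs.
  by rewrite /E !big_nil /= !mul0r.
have hs' : sorted ltn s by apply: path_sorted hs.
case: (IH hs') => h0 h1 h2 h3.
rewrite !Econs // h0 /= -natr1.
set N := (size s)%:R.
split.
- by rewrite addrC.
- by rewrite mulrDl h1; ring.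
- have e : E 1 s * 6 = E 1 s * 2 * 3 by ring.
  by rewrite mulrDl h2 e h1; ring.
- have e : E 2 s * 24 = E 2 s * 6 * 4 by ring.
  by rewrite mulrDl h3 e h2; ring.
Qed.

Definition nw (y : R) (a : nat) : bool := ~~ has (fun p : nat => p%:R < y) (primes a).

Lemma S_count (X : {fset nat}) (y : R) : S X y = count (nw y) X.
Proof. by rewrite /S card_imfset //= size_filter. Qed.

Lemma subA_S (A : {fset nat}) d (y : R) :
  S (subA A d) y = count (fun b => (d %| b)%N && nw y (b %/ d)%N) A.
Proof.
rewrite /S /subA.
have -> : [fset a in [fset (b %/ d)%N | b in A & (d %| b)%N] | nw y a]%fset =
   [fset (b %/ d)%N | b in A & (d %| b)%N && nw y (b %/ d)%N]%fset.
  apply/fsetP => x; rewrite inE /=; apply/andP/imfsetP.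
    move=> [/imfsetP [b /= /andP[hb hd] ->] hn]; exists b => //=.
    by rewrite inE /=; apply/andP; split => //; apply/andP.
  move=> [b /= /andP[hb /andP[hd hn]] ->]; split => //.
  by apply/imfsetP; exists b => //=; rewrite inE /=; apply/andP.
rewrite card_in_imfset /= ?size_filter //.
move=> b1 b2 /andP[_ /andP[h1 _]] /andP[_ /andP[h2 _]] /= e.
by rewrite -(divnK h1) -(divnK h2) e.
Qed.

Lemma count_sumR (s : seq nat) (P : pred nat) :
  (count P s)%:R = \sum_(x <- s) (P x)%:R :> R.
Proof.
elim: s => [|x s IH]; first by rewrite big_nil.
by rewrite big_cons /= natrD IH.
Qed.

Definition good (y : R) (d : nat) := forall p, prime p -> (p %| d)%N -> y <= p%:R.

Lemma goodM y d1 d2 : good y d1 -> good y d2 -> good y (d1 * d2).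
Proof.
move=> h1 h2 p pp; rewrite Euclid_dvdM // => /orP[]; [exact: h1 | exact: h2].
Qed.

Lemma good_prime y q : prime q -> y <= q%:R -> good y q.
Proof. by move=> pq hq p pp; rewrite dvdn_prime2 // => /eqP ->. Qed.

Lemma nw_div y a d : (0 < a)%N -> good y d ->
  ((d %| a)%N && nw y (a %/ d)%N) = nw y a && (d %| a)%N.
Proof.
move=> a0 gd; case da: (d %| a)%N; rewrite ?andbF ?andbT //.
have d0 : (0 < d)%N by apply: dvdn_gt0 da.
have a'0 : (0 < a %/ d)%N by rewrite divn_gt0 // dvdn_leq.
rewrite /nw; congr (~~ _); apply/hasP/hasP => [] [p hp hpy]; exists p => //.
  move: hp; rewrite !mem_primes => /and3P[pp _ pa']; rewrite pp a0 /=.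
  by apply: dvdn_trans pa' _; rewrite -{2}(divnK da) dvdn_mulr.
move: hp; rewrite !mem_primes => /and3P[pp _ pa]; rewrite pp a'0 /=.
move: pa; rewrite -{1}(divnK da) Euclid_dvdM // => /orP[] // pd.
by have := gd p pp pd; rewrite leNgt hpy.
Qed.

Lemma andR (b1 b2 : bool) : (b1 && b2)%:R = b1%:R * b2%:R :> R.
Proof. by case: b1; case: b2; rewrite ?mul1r ?mul0r. Qed.

Lemma filt (s : seq nat) (D P : pred nat) (F : nat -> R) :
  \sum_(p <- s | P p) (D p)%:R * F p = \sum_(p <- [seq q <- s | D q] | P p) F p.
Proof.
rewrite big_filter_cond big_mkcondl; apply: eq_bigr => p _.
by case: (D p); rewrite ?mul1r ?mul0r.
Qed.


Fixpoint Cw (v : nat -> R) (c : R) (k : nat) (s : seq nat) (p : nat) : R :=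
  if k is k'.+1 then \sum_(q <- s | (q < p)%N) v q * Cw v c k' s q else c.

Lemma Cw_filter (D : pred nat) c k s p :
  Cw (fun q => (D q)%:R) c k s p = c * C k [seq q <- s | D q] p.
Proof.
elim: k p => [|k IH] p /=; first by rewrite mulr1.
rewrite (eq_bigr (fun q => (D q)%:R * (c * C k [seq q <- s | D q] q))); last first.
  by move=> q _; rewrite IH.
by rewrite filt mulr_sumr.
Qed.

Lemma Ew (D : pred nat) c k s :
  \sum_(p <- s) (D p)%:R * Cw (fun q => (D q)%:R) c k s p = c * E k [seq q <- s | D q].
Proof.
rewrite (eq_bigr (fun p => (D p)%:R * (c * C k [seq q <- s | D q] p))); last first.
  by move=> p _; rewrite Cw_filter.
by rewrite (filt _ _ xpredT) /E mulr_sumr.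
Qed.

Lemma coprime_primes p q : prime p -> prime q -> coprime p q = (p != q).
Proof. by move=> pp pq; rewrite prime_coprime // dvdn_prime2. Qed.

Lemma dvd2 p1 p2 a : prime p1 -> prime p2 -> (p2 < p1)%N ->
  (p1 * p2 %| a)%N = (p1 %| a)%N && (p2 %| a)%N.
Proof.
move=> pp1 pp2 l; rewrite Gauss_dvd // coprime_primes //.
by rewrite neq_ltn l orbT.
Qed.

Lemma dvd3 p1 p2 p3 a : prime p1 -> prime p2 -> prime p3 -> (p2 < p1)%N -> (p3 < p2)%N ->
  (p1 * p2 * p3 %| a)%N = [&& (p1 %| a)%N, (p2 %| a)%N & (p3 %| a)%N].
Proof.
move=> pp1 pp2 pp3 l1 l2; rewrite Gauss_dvd ?dvd2 -?andbA //.
rewrite coprimeMl !coprime_primes // !neq_ltn; apply/andP; split; apply/orP; right => //.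
exact: ltn_trans l1.
Qed.

Lemma dvd4 p1 p2 p3 p4 a : prime p1 -> prime p2 -> prime p3 -> prime p4 ->
  (p2 < p1)%N -> (p3 < p2)%N -> (p4 < p3)%N ->
  (p1 * p2 * p3 * p4 %| a)%N = [&& (p1 %| a)%N, (p2 %| a)%N, (p3 %| a)%N & (p4 %| a)%N].
Proof.
move=> pp1 pp2 pp3 pp4 l1 l2 l3; rewrite Gauss_dvd ?dvd3 -?andbA //.
rewrite !coprimeMl !coprime_primes // !neq_ltn.
by rewrite l3 (ltn_trans l3 l2) (ltn_trans (ltn_trans l3 l2) l1) !orbT.
Qed.

Section PerA.
Variables (w : R) (s : seq nat).
Hypothesis hs : forall p, p \in s -> prime p && (w <= p%:R).
Variables (a : nat).
Hypothesis a0 : (0 < a)%N.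

Let D := fun p => (p %| a)%N.

Lemma gp p : p \in s -> good w p.
Proof. by move=> /hs /andP[pp wp]; apply: good_prime. Qed.

Lemma pr p : p \in s -> prime p.
Proof. by move=> /hs /andP[]. Qed.

Lemma perA1 : \sum_(p1 <- s) ((p1 %| a)%N && nw w (a %/ p1)%N)%:R
   = (nw w a)%:R * E 0 [seq q <- s | D q].
Proof.
rewrite -Ew big_seq [RHS]big_seq; apply: eq_bigr => p1 h1 /=.
by rewrite nw_div //; [rewrite andR mulrC | apply: gp].
Qed.

Lemma perA2 : \sum_(p1 <- s) \sum_(p2 <- s | (p2 < p1)%N)
     ((p1 * p2 %| a)%N && nw w (a %/ (p1 * p2))%N)%:R
   = (nw w a)%:R * E 1 [seq q <- s | D q].
Proof.
rewrite -Ew big_seq [RHS]big_seq; apply: eq_bigr => p1 h1 /=.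
rewrite mulr_sumr big_seq_cond [RHS]big_seq_cond; apply: eq_bigr => p2 /andP[h2 l21].
rewrite nw_div //; last by apply: goodM; apply: gp.
rewrite dvd2 ?pr // !andR /D; ring.
Qed.

Lemma perA3 : \sum_(p1 <- s) \sum_(p2 <- s | (p2 < p1)%N) \sum_(p3 <- s | (p3 < p2)%N)
     ((p1 * p2 * p3 %| a)%N && nw w (a %/ (p1 * p2 * p3))%N)%:R
   = (nw w a)%:R * E 2 [seq q <- s | D q].
Proof.
rewrite -Ew big_seq [RHS]big_seq; apply: eq_bigr => p1 h1 /=.
rewrite mulr_sumr big_seq_cond [RHS]big_seq_cond; apply: eq_bigr => p2 /andP[h2 l21].
rewrite !mulr_sumr big_seq_cond [RHS]big_seq_cond; apply: eq_bigr => p3 /andP[h3 l32].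
rewrite nw_div //; last by (do 2? apply: goodM); apply: gp.
rewrite dvd3 ?pr // !andR /D; ring.
Qed.

Lemma perA4 : \sum_(p1 <- s) \sum_(p2 <- s | (p2 < p1)%N) \sum_(p3 <- s | (p3 < p2)%N)
     \sum_(p4 <- s | (p4 < p3)%N)
     ((p1 * p2 * p3 * p4 %| a)%N && nw w (a %/ (p1 * p2 * p3 * p4))%N)%:R
   = (nw w a)%:R * E 3 [seq q <- s | D q].
Proof.
rewrite -Ew big_seq [RHS]big_seq; apply: eq_bigr => p1 h1 /=.
rewrite mulr_sumr big_seq_cond [RHS]big_seq_cond; apply: eq_bigr => p2 /andP[h2 l21].
rewrite !mulr_sumr big_seq_cond [RHS]big_seq_cond; apply: eq_bigr => p3 /andP[h3 l32].
rewrite !mulr_sumr big_seq_cond [RHS]big_seq_cond; apply: eq_bigr => p4 /andP[h4 l43].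
rewrite nw_div //; last by (do 3? apply: goodM); apply: gp.
rewrite dvd4 ?pr // !andR /D; ring.
Qed.

End PerA.

Lemma final (n : nat) (bz : bool) (m1 m2 m3 m4 e0 e1 e2 e3 N M1 M2 M3 P : R) :
  (bz -> n = 0%N) -> inU m1 m2 -> inU m3 m4 ->
  N = n%:R ->
  e0 = N -> e1 * 2 = N * (N - 1) -> e2 * 6 = N * (N - 1) * (N - 2) ->
  e3 * 24 = N * (N - 1) * (N - 2) * (N - 3) ->
  M1 = m1 + m2 + m3 + m4 ->
  M2 = m1 * m2 + m1 * m3 + m1 * m4 + m2 * m3 + m2 * m4 + m3 * m4 ->
  M3 = m1 * m2 * m3 + m1 * m2 * m4 + m1 * m3 * m4 + m2 * m3 * m4 ->
  P = m1 * m2 * m3 * m4 ->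
  bz%:R <= 1 - (M3 - M2 + M1 - 1) / P * e0 + 2 * (M2 - 3 * M1 + 7) / P * e1
           - 6 * (M1 - 6) / P * e2 + 24 / P * e3.
Proof.
move=> hb h12 h34 hN h0 h1 h2 h3 hM1 hM2 hM3 hP.
have [p1 _] := @inT_odd m1 h12.1.
have [p2 _] := @inT_odd m2 h12.2.1.
have [p3 _] := @inT_odd m3 h34.1.
have [p4 _] := @inT_odd m4 h34.2.1.
have P0 : 0 < P by rewrite hP !mulr_gt0.
have P0' : P != 0 by rewrite gt_eqF.
have n2 : (2:R) != 0 by rewrite pnatr_eq0.
have n6 : (6:R) != 0 by rewrite pnatr_eq0.
have n24 : (24:R) != 0 by rewrite pnatr_eq0.
have e1E : e1 = N * (N - 1) / 2 by rewrite -h1 mulfK.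
have e2E : e2 = N * (N - 1) * (N - 2) / 6 by rewrite -h2 mulfK.
have e3E : e3 = N * (N - 1) * (N - 2) * (N - 3) / 24 by rewrite -h3 mulfK.
have key : 1 - (M3 - M2 + M1 - 1) / P * e0 + 2 * (M2 - 3 * M1 + 7) / P * e1
           - 6 * (M1 - 6) / P * e2 + 24 / P * e3 =
           ((N - m1) * (N - m2)) * ((N - m3) * (N - m4)) / P.
  rewrite h0 e1E e2E e3E hM1 hM2 hM3 hP; field.
  by rewrite !gt_eqF.
rewrite key; subst N; case: n hb {h0 h1 h2 h3 e1E e2E e3E key} => [|n] hb.
  rewrite !sub0r !mulrNN -!mulrA.
  have -> : m1 * (m2 * (m3 * (m4 / P))) = 1 by rewrite !mulrA -hP divff.
  by case: bz {hb}.
case: bz hb => [/(_ isT) //|_] /=.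
apply: divr_ge0; last exact: ltW.
by apply: mulr_ge0; apply: keyU.
Qed.

Section Levels.
Variables (A : {fset nat}) (w : R) (s : seq nat).
Hypothesis hA : forall b, b \in A -> (0 < b)%N.
Hypothesis hs : forall p, p \in s -> prime p && (w <= p%:R).

Lemma Ssum d : (S (subA A d) w)%:R = \sum_(b <- A) ((d %| b)%N && nw w (b %/ d)%N)%:R :> R.
Proof. by rewrite subA_S count_sumR. Qed.

Lemma lvl1 : \sum_(p1 <- s) (S (subA A p1) w)%:R
   = \sum_(b <- A) (nw w b)%:R * E 0 [seq q <- s | (q %| b)%N].
Proof.
transitivity (\sum_(b <- A) \sum_(p1 <- s) ((p1 %| b)%N && nw w (b %/ p1)%N)%:R : R).
  rewrite [RHS]exchange_big; apply: eq_bigr => p1 _; exact: Ssum.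
apply: eq_big_seq => b hb; exact: (@perA1 w s hs b (hA b hb)).
Qed.

Lemma lvl2 : \sum_(p1 <- s) \sum_(p2 <- s | (p2 < p1)%N) (S (subA A (p1 * p2)) w)%:R
   = \sum_(b <- A) (nw w b)%:R * E 1 [seq q <- s | (q %| b)%N].
Proof.
transitivity (\sum_(b <- A) \sum_(p1 <- s) \sum_(p2 <- s | (p2 < p1)%N)
   ((p1 * p2 %| b)%N && nw w (b %/ (p1 * p2))%N)%:R : R).
  rewrite [RHS]exchange_big; apply: eq_bigr => p1 _.
  rewrite [RHS]exchange_big; apply: eq_bigr => p2 _; exact: Ssum.
apply: eq_big_seq => b hb; exact: (@perA2 w s hs b (hA b hb)).
Qed.

Lemma lvl3 : \sum_(p1 <- s) \sum_(p2 <- s | (p2 < p1)%N) \sum_(p3 <- s | (p3 < p2)%N)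
     (S (subA A (p1 * p2 * p3)) w)%:R
   = \sum_(b <- A) (nw w b)%:R * E 2 [seq q <- s | (q %| b)%N].
Proof.
transitivity (\sum_(b <- A) \sum_(p1 <- s) \sum_(p2 <- s | (p2 < p1)%N)
   \sum_(p3 <- s | (p3 < p2)%N)
   ((p1 * p2 * p3 %| b)%N && nw w (b %/ (p1 * p2 * p3))%N)%:R : R).
  rewrite [RHS]exchange_big; apply: eq_bigr => p1 _.
  rewrite [RHS]exchange_big; apply: eq_bigr => p2 _.
  rewrite [RHS]exchange_big; apply: eq_bigr => p3 _; exact: Ssum.
apply: eq_big_seq => b hb; exact: (@perA3 w s hs b (hA b hb)).
Qed.

Lemma lvl4 : \sum_(p1 <- s) \sum_(p2 <- s | (p2 < p1)%N) \sum_(p3 <- s | (p3 < p2)%N)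
     \sum_(p4 <- s | (p4 < p3)%N)
     (S (subA A (p1 * p2 * p3 * p4)) w)%:R
   = \sum_(b <- A) (nw w b)%:R * E 3 [seq q <- s | (q %| b)%N].
Proof.
transitivity (\sum_(b <- A) \sum_(p1 <- s) \sum_(p2 <- s | (p2 < p1)%N)
   \sum_(p3 <- s | (p3 < p2)%N) \sum_(p4 <- s | (p4 < p3)%N)
   ((p1 * p2 * p3 * p4 %| b)%N && nw w (b %/ (p1 * p2 * p3 * p4))%N)%:R : R).
  rewrite [RHS]exchange_big; apply: eq_bigr => p1 _.
  rewrite [RHS]exchange_big; apply: eq_bigr => p2 _.
  rewrite [RHS]exchange_big; apply: eq_bigr => p3 _.
  rewrite [RHS]exchange_big; apply: eq_bigr => p4 _; exact: Ssum.
apply: eq_big_seq => b hb; exact: (@perA4 w s hs b (hA b hb)).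
Qed.
End Levels.
End Main.
Arguments nw {R}.
Arguments E {R}.

Theorem theorem3 (R : realType) (A : {fset nat}) (w z m1 m2 m3 m4 : R) :
  (forall a, a \in A -> (0 < a)%N) ->
  w <= z ->
  inU m1 m2 -> inU m3 m4 ->
  let M1 := m1 + m2 + m3 + m4 in
  let M2 := m1 * m2 + m1 * m3 + m1 * m4 + m2 * m3 + m2 * m4 + m3 * m4 in
  let M3 := m1 * m2 * m3 + m1 * m2 * m4 + m1 * m3 * m4 + m2 * m3 * m4 in
  let P := m1 * m2 * m3 * m4 in
  let PS := primes_between w z in
  (S A z)%:R <=
    (S A w)%:R
    - (M3 - M2 + M1 - 1) / P *
        \sum_(p1 <- PS) (S (subA A p1) w)%:R
    + 2 * (M2 - 3 * M1 + 7) / P *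
        \sum_(p1 <- PS) \sum_(p2 <- PS | (p2 < p1)%N)
          (S (subA A (p1 * p2)) w)%:R
    - 6 * (M1 - 6) / P *
        \sum_(p1 <- PS) \sum_(p2 <- PS | (p2 < p1)%N) \sum_(p3 <- PS | (p3 < p2)%N)
          (S (subA A (p1 * p2 * p3)) w)%:R
    + 24 / P *
        \sum_(p1 <- PS) \sum_(p2 <- PS | (p2 < p1)%N) \sum_(p3 <- PS | (p3 < p2)%N)
          \sum_(p4 <- PS | (p4 < p3)%N)
          (S (subA A (p1 * p2 * p3 * p4)) w)%:R.
Proof.
move=> hA hwz h12 h34; cbv zeta; set PS := primes_between w z.
have memPS p : p \in PS -> [&& prime p, w <= p%:R & p%:R < z].
  by rewrite mem_filter => /andP[/andP[/andP[-> ->] ->] _].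
have hs p : p \in PS -> prime p && (w <= p%:R).
  by move/memPS => /and3P[-> -> _].
have sPS : sorted ltn PS by apply: sorted_filter => //; [exact: ltn_trans | exact: iota_ltn_sorted].
rewrite (@lvl1 R A w PS hA hs) (@lvl2 R A w PS hA hs) (@lvl3 R A w PS hA hs) (@lvl4 R A w PS hA hs) !S_count !count_sumR.
rewrite !mulr_sumr -sumrB -big_split -sumrB -big_split /=.
rewrite big_seq [X in _ <= X]big_seq; apply: ler_sum => b hb.
set Q := [seq q <- PS | (q %| b)%N].
have sQ : sorted ltn Q by apply: sorted_filter => //; exact: ltn_trans.
have hz : nw z b -> size Q = 0%N.
  move=> hz; apply/eqP; rewrite size_filter -leqn0 leqNgt -has_count.
  apply/negP => /hasP [p pPS pb].
  move: hz; rewrite /nw => /negP; apply; apply/hasP; exists p.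
    by rewrite mem_primes (hA b hb) pb; case/and3P: (memPS p pPS) => ->.
  by case/and3P: (memPS p pPS).
case cb: (nw w b); last first.
  have -> : nw z b = false.
    move/negbT: cb; rewrite /nw negbK => H; apply/negbF.
    apply: sub_has H => p /= pw; exact: lt_le_trans pw hwz.
  by rewrite /= !mul0r !mulr0 !subr0 !addr0.
rewrite /= !mul1r.
have [e0 e1 e2 e3] := @Eform R Q sQ.
by apply: (@final R (size Q)) => //.
Qed.
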